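(* Let $\mathcal F$ be a proper filter on $\omega$ and consider the game $\mathfrak G(\mathcal F,\omega,\mathcal F)$. Then (1) player I has a winning strategy if and only if $\mathcal F$ is not Ramsey; (2) player II never has a winning strategy.
   Context: A filter on $\omega$ is a family $\mathcal F\subseteq\mathcal P(\omega)$ closed under finite intersections and supersets and containing all cofinite sets; it is proper if all its members are infinite. Game $\mathfrak G(\mathcal X,\omega,\mathcal Z)$: at each stage $k\in\omega$, player I chooses $X_k\in\mathcal X$ and player II responds with $n_k\in X_k$; II wins if $\{n_k:k\in\omega\}\in\mathcal Z$, otherwise I wins. A tree is a set $T$ of finite sequences of natural numbers containing the empty sequence and closed under initial segments; for $\mathcal X\subseteq\mathcal P(\omega)$ it is an $\mathcal X$-tree if for each $\bar s\in T$ there is $X_{\bar s}\in\mathcal X$ with $\bar s^\frown n\in T$ for all $n\in X_{\bar s}$. A branch is an infinite sequence all of whose finite initial segments lie in $T$; a branch is ''in'' a family if its set of values belongs to that family. $\mathcal F$ is Ramsey if every $\mathcal F$-tree has a branch in $\mathcal F$ (equivalently, $\mathcal F$ is both a Q-filter and a P-filter, where a Q-filter is one such that for every partition of $\omega$ into finite sets $s_k$ there is $X\in\mathcal F$ with $|X\cap s_k|\le 1$ for all $k$, and a P-filter is one such that every countable subfamily $\{X_n\}$ has some $X\in\mathcal F$ with $X\setminus X_n$ finite for all $n$). *)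

(* Defs.v *)
From mathcomp Require Import all_boot.
Set Implicit Arguments.
Unset Strict Implicit.
Unset Printing Implicit Defensive.

Definition nset := nat -> Prop.
Definition nfamily := nset -> Prop.

Definition cofinite (A : nset) : Prop := exists N, forall n, N <= n -> A n.
Definition infinite_set (A : nset) : Prop := forall N, exists n, N <= n /\ A n.

Definition is_filter (F : nfamily) : Prop :=
  [/\ (forall A B, F A -> F B -> F (fun n => A n /\ B n)),
      (forall A B, F A -> (forall n, A n -> B n) -> F B)
    & (forall A, cofinite A -> F A)].

Definition proper_filter (F : nfamily) : Prop :=
  is_filter F /\ forall A, F A -> infinite_set A.

Definition range_of (f : nat -> nat) : nset := fun m => exists k, f k = m.

Definition is_tree (T : seq nat -> Prop) : Prop :=
  T [::] /\ forall s t, T (s ++ t) -> T s.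

Definition X_tree (X : nfamily) (T : seq nat -> Prop) : Prop :=
  is_tree T /\
  forall s, T s -> exists Xs, X Xs /\ forall n, Xs n -> T (rcons s n).

Definition branch (T : seq nat -> Prop) (f : nat -> nat) : Prop :=
  forall k, T (mkseq f k).

Definition Ramsey (F : nfamily) : Prop :=
  forall T, X_tree F T -> exists f, branch T f /\ F (range_of f).

(* The game G(X, omega, Z): at stage k, I plays X_k in X, II answers n_k in X_k;
   II wins iff {n_k : k} in Z. *)

(* A strategy for I maps the finite history of II's moves (n_0,...,n_{k-1}) to
   I's next move X_k (I's own earlier moves are determined by the strategy). *)
Definition strategyI (X : nfamily) (tau : seq nat -> nset) : Prop :=
  forall s, X (tau s).

Definition playI_consistent (tau : seq nat -> nset) (n : nat -> nat) : Prop :=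
  forall k, tau (mkseq n k) (n k).

Definition I_winning (X Z : nfamily) (tau : seq nat -> nset) : Prop :=
  strategyI X tau /\
  forall n, playI_consistent tau n -> ~ Z (range_of n).

(* A strategy for II maps the history of I's moves (X_0,...,X_k) to n_k;
   it must be legal: n_k in X_k whenever all X_i are legal moves. *)
Definition strategyII (X : nfamily) (sigma : seq nset -> nat) : Prop :=
  forall Xs : nat -> nset, (forall k, X (Xs k)) ->
    forall k, Xs k (sigma (mkseq Xs k.+1)).

Definition II_winning (X Z : nfamily) (sigma : seq nset -> nat) : Prop :=
  strategyII X sigma /\
  forall Xs : nat -> nset, (forall k, X (Xs k)) ->
    Z (range_of (fun k => sigma (mkseq Xs k.+1))).

(* Main.v *)
Require Import Defs.
From mathcomp Require Import all_boot.
From mathcomp Require Import zify.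
From Stdlib Require Import Classical ClassicalEpsilon FunctionalExtensionality PropExtensionality.

Fixpoint hist (G : seq nat -> nat) n : seq nat :=
  match n with 0 => [::] | k.+1 => rcons (hist G k) (G (hist G k)) end.
Definition cv G n := G (hist G n).

Lemma hist_mk G n : hist G n = mkseq (cv G) n.
Proof. elim: n => [//|n IH] /=; by rewrite mkseqS -IH. Qed.

Lemma cv_eq G n : cv G n = G (mkseq (cv G) n).
Proof. by rewrite /cv hist_mk. Qed.

Lemma mkseq_ext (T : Type) (f g : nat -> T) n :
  (forall j, j < n -> f j = g j) -> mkseq f n = mkseq g n.
Proof.
move=> H; rewrite /mkseq; apply/eq_in_map => j; rewrite mem_iota add0n => /andP[_ Hj].
exact: H.
Qed.

Lemma cof_avoid (f : nat -> nat) j : cofinite (fun m => forall i, i < j -> m <> f i).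
Proof.
elim: j => [|j [N HN]]; first by exists 0.
exists (maxn N (f j).+1) => n Hn i; rewrite ltnS leq_eqVlt => /orP[/eqP->|Hi].
  lia.
apply: HN => //; lia.
Qed.

Lemma take_mk (f : nat -> nat) k : take k (mkseq f k.+1) = mkseq f k.
Proof. by rewrite mkseqS -cats1 take_size_cat // size_mkseq. Qed.

Theorem theorem2p6 (F : nfamily) (hF : proper_filter F) :
  ((exists tau, I_winning F F tau) <-> ~ Ramsey F) /\
  ~ (exists sigma, II_winning F F sigma).
Proof.
case: hF => [[Hint Hsup Hcof] Hinf].
split; [split|].
- move=> [tau [Hs Hw]] HR.
  pose T := fun s : seq nat => forall k, k < size s -> tau (take k s) (nth 0 s k).
  have HT : X_tree F T.
    split; first split.
    + by move=> k.
    + move=> s t Hst k Hk.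
      have Hk' : k < size (s ++ t) by rewrite size_cat; apply: leq_trans Hk (leq_addr _ _).
      have := Hst k Hk'.
      by rewrite takel_cat ?(ltnW Hk) // nth_cat Hk.
    + move=> s Ts; exists (tau s); split; first exact: Hs.
      move=> n Hn k; rewrite size_rcons ltnS leq_eqVlt => /orP [/eqP-> | Hk].
        by rewrite -cats1 take_size_cat // nth_cat ltnn subnn.
      by rewrite -cats1 takel_cat ?(ltnW Hk) // nth_cat Hk; exact: Ts.
  have [f [Hb HF]] := HR T HT.
  apply: (Hw f _ HF) => k.
  have := Hb k.+1 k; rewrite size_mkseq ltnSn => /(_ isT).
  by rewrite take_mk nth_mkseq.
- move=> HnR.
  have [T [[[T0 Tcl] Tx] Hno]] :
      exists T, X_tree F T /\ forall f, branch T f -> ~ F (range_of f).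
    apply: NNPP => H; apply: HnR => T HT; apply: NNPP => H2; apply: H.
    exists T; split => // f Hb Hf; apply: H2; by exists f.
  pose tau := fun s => match excluded_middle_informative (T s) with
    | left Ts => proj1_sig (constructive_indefinite_description _ (Tx s Ts))
    | right _ => fun _ : nat => True end.
  exists tau; split.
    move=> s; rewrite /tau; case: excluded_middle_informative => [Ts|_].
      by case: constructive_indefinite_description => X [].
    by apply: Hcof; exists 0.
  move=> n Hc; apply: Hno => k; elim: k => [//|k IH].
  rewrite mkseqS; have := Hc k; rewrite /tau.
  case: excluded_middle_informative => [Ts|//].
  case: constructive_indefinite_description => X [_ HX] /=; exact: HX.
- move=> [sigma [Hleg Hwin]].
  pose G := fun h : seq nat =>
    if odd (size h) then
      sigma (mkseq (fun j m => forall i, i < j.+1 -> m <> nth 0 h (2*i)) ((size h)./2).+1)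
    else sigma (mkseq (fun j m => forall i, i < j -> m <> nth 0 h (2*i+1)) ((size h)./2).+1).
  pose c := cv G.
  pose XA := fun j m => forall i, i < j -> m <> c (2*i+1).
  pose XB := fun j m => forall i, i < j.+1 -> m <> c (2*i).
  have Ea : forall k, c (2*k) = sigma (mkseq XA k.+1).
    move=> k; rewrite /c cv_eq /G size_mkseq.
    have -> : odd (2 * k) = false by rewrite oddM.
    have -> : (2 * k)./2 = k by rewrite mul2n half_double.
    congr sigma; apply: mkseq_ext => j Hj.
    apply: functional_extensionality => m; apply: propositional_extensionality.
    split => H i Hi.
      have := H i Hi; rewrite nth_mkseq //; lia.
    rewrite nth_mkseq; [exact: H | lia].
  have Eb : forall k, c (2*k+1) = sigma (mkseq XB k.+1).
    move=> k; rewrite /c cv_eq /G size_mkseq.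
    have -> : odd (2 * k + 1) = true by rewrite addn1 /= oddM.
    have -> : (2 * k + 1)./2 = k by rewrite addn1 mul2n -[(k.*2.+1)./2]/(uphalf k.*2) uphalf_double.
    congr sigma; apply: mkseq_ext => j Hj.
    apply: functional_extensionality => m; apply: propositional_extensionality.
    split => H i Hi.
      have := H i Hi; rewrite nth_mkseq //; lia.
    rewrite nth_mkseq; [exact: H | lia].
  have FA : forall j, F (XA j) by move=> j; apply: Hcof; exact: cof_avoid.
  have FB : forall j, F (XB j) by move=> j; apply: Hcof; exact: cof_avoid.
  have LA : forall k, XA k (c (2*k)) by move=> k; rewrite Ea; exact: (Hleg XA FA k).
  have LB : forall k, XB k (c (2*k+1)) by move=> k; rewrite Eb; exact: (Hleg XB FB k).
  have RA : F (range_of (fun k => c (2*k))).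
    have -> : (fun k => c (2*k)) = (fun k => sigma (mkseq XA k.+1)).
      by apply: functional_extensionality => k; rewrite Ea.
    exact: Hwin.
  have RB : F (range_of (fun k => c (2*k+1))).
    have -> : (fun k => c (2*k+1)) = (fun k => sigma (mkseq XB k.+1)).
      by apply: functional_extensionality => k; rewrite Eb.
    exact: Hwin.
  have [n [_ [[i Hi] [j Hj]]]] := Hinf _ (Hint _ _ RA RB) 0.
  case: (leqP i j) => Hij.
    by apply: (LB j i Hij); rewrite Hj.
  by apply: (LA i j Hij); rewrite Hi.
Qed.
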